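(* In any principal ideal domain $R$, every completely prime left ideal is structurally prime.
   Context: A principal ideal domain (PID) is a (not necessarily commutative) domain in which every left ideal and every right ideal is principal. A left ideal $\mathfrak{p}$ is completely prime if $\mathfrak{p}\neq R$ and for $a,b\in R$, $ab\in\mathfrak{p}$ and $\mathfrak{p}b\subseteq\mathfrak{p}$ imply $a\in\mathfrak{p}$ or $b\in\mathfrak{p}$. A left ideal $\mathfrak{p}$ is structurally prime if $\mathfrak{p}\neq R$ and for left ideals $A,B$, $AB\subseteq\mathfrak{p}$ implies $A\subseteq\mathfrak{p}$ or $B\subseteq\mathfrak{p}$. *)

(* Defs.v *)
From HB Require Import structures.
From mathcomp Require Import all_boot all_order all_algebra.
Set Implicit Arguments. Unset Strict Implicit. Unset Printing Implicit Defensive.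
Import GRing.Theory.
Local Open Scope ring_scope.

Definition left_ideal (R : nzRingType) (I : R -> Prop) : Prop :=
  [/\ I 0, (forall x y, I x -> I y -> I (x + y)),
      (forall x, I x -> I (- x)) & (forall r x, I x -> I (r * x))].

Definition right_ideal (R : nzRingType) (I : R -> Prop) : Prop :=
  [/\ I 0, (forall x y, I x -> I y -> I (x + y)),
      (forall x, I x -> I (- x)) & (forall r x, I x -> I (x * r))].

Definition principal_left (R : nzRingType) (I : R -> Prop) : Prop :=
  exists a : R, forall x, I x <-> exists r, x = r * a.

Definition principal_right (R : nzRingType) (I : R -> Prop) : Prop :=
  exists a : R, forall x, I x <-> exists r, x = a * r.

(* domain: nonzero ring (built into nzRingType) without zero divisors *)
Definition is_domain (R : nzRingType) : Prop :=
  forall a b : R, a * b = 0 -> a = 0 \/ b = 0.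

Definition is_PID (R : nzRingType) : Prop :=
  [/\ is_domain R,
      (forall I : R -> Prop, left_ideal I -> principal_left I) &
      (forall I : R -> Prop, right_ideal I -> principal_right I)].

Inductive ideal_prod (R : nzRingType) (A B : R -> Prop) : R -> Prop :=
  | ip_zero : ideal_prod A B 0
  | ip_mul : forall a b, A a -> B b -> ideal_prod A B (a * b)
  | ip_add : forall x y, ideal_prod A B x -> ideal_prod A B y ->
      ideal_prod A B (x + y).

Definition subset (R : nzRingType) (A B : R -> Prop) : Prop :=
  forall x, A x -> B x.

Definition proper (R : nzRingType) (P : R -> Prop) : Prop :=
  exists x, ~ P x.

Definition completely_prime_left (R : nzRingType) (P : R -> Prop) : Prop :=
  left_ideal P /\ proper P /\
  forall a b : R, P (a * b) -> (forall x, P x -> P (x * b)) -> P a \/ P b.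

Definition structurally_prime_left (R : nzRingType) (P : R -> Prop) : Prop :=
  left_ideal P /\ proper P /\
  forall A B : R -> Prop, left_ideal A -> left_ideal B ->
    subset (ideal_prod A B) P -> subset A P \/ subset B P.

(* Main.v *)
Require Import Defs.
From mathcomp Require Import all_boot all_order all_algebra.
From Stdlib Require Import Classical.
Set Implicit Arguments. Unset Strict Implicit. Unset Printing Implicit Defensive.
Import GRing.Theory.
Local Open Scope ring_scope.

Lemma dom_mulIf (R : nzRingType) : is_domain R ->
  forall x a b : R, x != 0 -> a * x = b * x -> a = b.
Proof.
move=> dom x a b nx e.
have : (a - b) * x = 0 by rewrite mulrBl e subrr.
move/dom=> [/eqP|/eqP]; first by rewrite subr_eq0 => /eqP.
by rewrite (negbTE nx).
Qed.

Lemma dom_mulfI (R : nzRingType) : is_domain R ->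
  forall x a b : R, x != 0 -> x * a = x * b -> a = b.
Proof.
move=> dom x a b nx e.
have : x * (a - b) = 0 by rewrite mulrBr e subrr.
move/dom=> [/eqP|/eqP]; first by rewrite (negbTE nx).
by rewrite subr_eq0 => /eqP.
Qed.

Lemma dom_inv (R : nzRingType) : is_domain R ->
  forall v w : R, w * v = 1 -> v * w = 1.
Proof.
move=> dom v w e.
have nv : v != 0.
  by apply/eqP=> v0; move: e; rewrite v0 mulr0 => /eqP; rewrite eq_sym oner_eq0.
apply: (dom_mulIf dom nv).
by rewrite -mulrA e mulr1 mul1r.
Qed.

Lemma invariant_gen (R : nzRingType) (T : R -> Prop) (c e : R) :
  is_domain R -> c != 0 ->
  (forall x, T x <-> exists r, x = r * c) ->
  (forall x, T x <-> exists r, x = e * r) ->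
  forall x, T x <-> exists r, x = c * r.
Proof.
move=> dom nc Hl Hr.
have [v ev] : exists v, c = e * v by apply/Hr/Hl; exists 1; rewrite mul1r.
have [u eu] : exists u, e = u * c by apply/Hl/Hr; exists 1; rewrite mulr1.
have [w ew] : exists w, u * e = e * w.
  by apply/Hr/Hl; exists (u * u); rewrite eu mulrA.
have ne : e != 0 by apply/eqP=> e0; move: nc; rewrite ev e0 mul0r eqxx.
have wv : w * v = 1.
  apply: (dom_mulfI dom ne); rewrite mulr1 mulrA -ew -mulrA -ev -eu //.
have vw := dom_inv dom wv.
move=> x; split.
  move/Hr=> [r ->]; exists (w * r).
  by rewrite ev -mulrA (mulrA v) vw mul1r.
move=> [r ->]; apply/Hr; exists (v * r); by rewrite ev mulrA.
Qed.
Lemma pow_inv (R : nzRingType) (c : R) :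
  (forall r, exists r', r * c = c * r') ->
  (forall r, exists r', c * r = r' * c) ->
  forall n r, (exists r', r * c ^+ n = c ^+ n * r') /\
              (exists r', c ^+ n * r = r' * c ^+ n).
Proof.
move=> H1 H2; elim=> [|n IH] r.
  by split; exists r; rewrite expr0 mulr1 mul1r.
split.
  have [r1 e1] := H1 r.
  have [[r2 e2] _] := IH r1.
  by exists r2; rewrite exprS mulrA e1 -mulrA e2 mulrA.
have [_ [r1 e1]] := IH r.
have [r2 e2] := H2 r1.
by exists r2; rewrite exprS -mulrA e1 mulrA e2 mulrA.
Qed.

Lemma acc_E (R : nzRingType) (P : R -> Prop) (c : R) :
  (forall I : R -> Prop, left_ideal I -> principal_left I) ->
  left_ideal P ->
  (forall n r, exists r', c ^+ n * r = r' * c ^+ n) ->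
  exists n0, forall s m N, (n0 <= N)%N -> P (c ^+ m * s) -> P (c ^+ N * s).
Proof.
move=> lp [P0 PD PN PM] Hp.
pose U y := exists n, P (c ^+ n * y).
have lU : left_ideal U.
  split.
  - by exists 0%N; rewrite mulr0.
  - move=> x y [n hn] [m hm]; exists (n + m)%N.
    rewrite mulrDr; apply: (PD).
      by rewrite addnC exprD -mulrA; apply: (PM).
    by rewrite exprD -mulrA; apply: (PM).
  - by move=> x [n hn]; exists n; rewrite mulrN; apply: (PN).
  - move=> r x [n hn]; exists n; have [r' e] := Hp n r.
    by rewrite mulrA e -mulrA; apply: (PM).
have [u Hu] := lp _ lU.
have [n0 hn0] : U u by apply/Hu; exists 1; rewrite mul1r.
exists n0 => s m N le hm.
have /Hu [r ->] : U s by exists m.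
rewrite -(subnK le) exprD -mulrA; apply: (PM).
have [r' e] := Hp n0 r.
by rewrite mulrA e -mulrA; apply: (PM).
Qed.
Definition Fset (R : nzRingType) (c p : R) (n : nat) (x : R) : Prop :=
  exists r q, x = r * c ^+ n + q * p.

Lemma Fset_anti (R : nzRingType) (c p : R) n m x :
  (n <= m)%N -> Fset c p m x -> Fset c p n x.
Proof.
move=> le [r [q ->]]; exists (r * c ^+ (m - n)), q.
by rewrite -mulrA -exprD subnK.
Qed.

Lemma Fset_left (R : nzRingType) (c p : R) n : left_ideal (Fset c p n).
Proof.
split.
- by exists 0, 0; rewrite !mul0r addr0.
- move=> x y [r [q ->]] [r' [q' ->]]; exists (r + r'), (q + q').
  by rewrite !mulrDl addrACA.
- move=> x [r [q ->]]; exists (- r), (- q); by rewrite opprD !mulNr.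
- move=> s x [r [q ->]]; exists (s * r), (s * q); by rewrite mulrDr !mulrA.
Qed.

Lemma dcc_F (R : nzRingType) (c p : R) :
  is_PID R -> p != 0 ->
  exists n1, forall m x, (n1 <= m)%N -> Fset c p n1 x -> Fset c p m x.
Proof.
move=> [dom lp rp] np.
pose spec n g := forall x, Fset c p n x <-> exists t, x = t * g.
have Qex : forall n, exists a g, spec n g /\ p = a * g.
  move=> n; have [g Hg] := lp _ (Fset_left c p n).
  have /Hg [a ea] : Fset c p n p by exists 0, 1; rewrite mul0r add0r mul1r.
  by exists a, g.
have mono : forall n m a g a' g', (n <= m)%N -> spec n g -> p = a * g ->
    spec m g' -> p = a' * g' -> exists t, a = a' * t /\ g' = t * g.
  move=> n m a g a' g' le sn ea sm ea'.
  have /sn [t et] : Fset c p n g'.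
    by apply: (Fset_anti le); apply/sm; exists 1; rewrite mul1r.
  have ng : g != 0 by apply/eqP=> g0; move: np; rewrite ea g0 mulr0 eqxx.
  exists t; split=> //; apply: (dom_mulIf dom ng).
  by rewrite -ea -mulrA -et.
pose V x := exists n a g s, spec n g /\ p = a * g /\ x = a * s.
have rV : right_ideal V.
  split.
  - have [a [g [sg ea]]] := Qex 0%N; by exists 0%N, a, g, 0; rewrite mulr0.
  - move=> x y [n [a [g [s [sn [ea ->]]]]]] [m [a' [g' [s' [sm [ea' ->]]]]]].
    have [a'' [g'' [sk ek]]] := Qex (maxn n m).
    have [t [et _]] := mono _ _ _ _ _ _ (leq_maxl n m) sn ea sk ek.
    have [t' [et' _]] := mono _ _ _ _ _ _ (leq_maxr n m) sm ea' sk ek.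
    exists (maxn n m), a'', g'', (t * s + t' * s'); split=> //; split=> //.
    by rewrite et et' mulrDr !mulrA.
  - move=> x [n [a [g [s [sn [ea ->]]]]]]; exists n, a, g, (- s).
    by rewrite mulrN.
  - move=> r x [n [a [g [s [sn [ea ->]]]]]]; exists n, a, g, (s * r).
    by rewrite mulrA.
have [v Hv] := rp _ rV.
have [n1 [a1 [g1 [s1 [s1n [ea1 ev]]]]]] : V v by apply/Hv; exists 1; rewrite mulr1.
exists n1 => m x le Fx.
have [am [gm [sm eam]]] := Qex m.
have /Hv [s' es'] : V am by exists m, am, gm, 1; rewrite mulr1.
have [t [et egm]] := mono _ _ _ _ _ _ le s1n ea1 sm eam.
have na1 : a1 != 0 by apply/eqP=> a0; move: np; rewrite ea1 a0 mul0r eqxx.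
have e1 : s1 * s' * t = 1.
  apply: (dom_mulfI dom na1); by rewrite mulr1 !mulrA -ev -es' -et.
apply/sm; have /s1n [t' ->] := Fx.
exists (t' * (s1 * s')).
have e2 : s1 * s' * (t * g1) = g1 by rewrite mulrA e1 mul1r.
by rewrite egm -mulrA e2.
Qed.
Lemma expr_neq0' (R : nzRingType) (c : R) : is_domain R -> c != 0 ->
  forall n, c ^+ n != 0.
Proof.
move=> dom nc; elim=> [|n IH]; first by rewrite expr0 oner_neq0.
apply/eqP; rewrite exprS => /dom [/eqP|/eqP]; by [rewrite (negbTE nc)|rewrite (negbTE IH)].
Qed.

Theorem proposition3p15 (R : nzRingType) (P : R -> Prop) :
  is_PID R -> completely_prime_left P -> structurally_prime_left P.
Proof.
move=> PID; have [dom lp rp] := PID.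
move=> [lP [prop cp]]; have lP' := lP; case: lP => P0 PD PN PM.
split=> //; split=> //.
move=> A B lA lB sub.
apply: NNPP => /not_or_and [nA nB].
have [a Ha0] := not_all_ex_not _ _ nA.
have [Aa nPa] := imply_to_and _ _ Ha0.
have [b Hb0] := not_all_ex_not _ _ nB.
have [Bb nPb] := imply_to_and _ _ Hb0.
case: lB => B0 BD BN BM.
pose T0 x := forall r y, B y -> P (x * (r * y)).
pose D y := forall t, T0 t -> P (t * y).
pose T x := forall d, D d -> P (x * d).
have Ta : T a.
  move=> d Dd; apply: Dd => r y By; apply: sub; apply: ip_mul => //; exact: BM.
have Db : D b by move=> t Tt; have := Tt 1 b Bb; rewrite mul1r.
have DM : forall r d, D d -> D (r * d).
  move=> r d Dd t Tt; rewrite mulrA; apply: Dd => r' y By.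
  have -> : t * r * (r' * y) = t * ((r * r') * y) by rewrite !mulrA.
  by apply: Tt.
have lT : left_ideal T.
  split.
  - by move=> d _; rewrite mul0r.
  - by move=> x y Tx Ty d Dd; rewrite mulrDl; apply: (PD); [apply: (Tx)|apply: (Ty)].
  - by move=> x Tx d Dd; rewrite mulNr; apply: (PN); apply: (Tx).
  - by move=> r x Tx d Dd; rewrite -mulrA; apply: (PM); apply: (Tx).
have rT : right_ideal T.
  split.
  - by move=> d _; rewrite mul0r.
  - by move=> x y Tx Ty d Dd; rewrite mulrDl; apply: (PD); [apply: (Tx)|apply: (Ty)].
  - by move=> x Tx d Dd; rewrite mulNr; apply: (PN); apply: (Tx).
  - by move=> r x Tx d Dd; rewrite -mulrA; apply: (Tx); apply: DM.
have [c Hl] := lp _ lT.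
have [e Hr] := rp _ rT.
have Tc : T c by apply/Hl; exists 1; rewrite mul1r.
have nPc : ~ P c.
  move=> Pc; apply: nPa; have /Hl [r ->] := Ta; exact: PM.
have nc : c != 0 by apply/eqP=> c0; apply: nPc; rewrite c0.
have Hc := invariant_gen dom nc Hl Hr.
have Hinv1 : forall r, exists r', r * c = c * r'.
  by move=> r; apply/Hc/Hl; exists r.
have Hinv2 : forall r, exists r', c * r = r' * c.
  by move=> r; apply/Hl/Hc; exists r.
have pow := pow_inv Hinv1 Hinv2.
have [p Hp] := lp _ lP'.
have Pp : P p by apply/Hp; exists 1; rewrite mul1r.
have Pcb : P (c * b) by apply: Tc.
have np : p != 0.
  apply/eqP=> p0; have /Hp [r] := Pcb; rewrite p0 mulr0 => /dom [/eqP|b0].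
    by rewrite (negbTE nc).
  by apply: nPb; rewrite b0.
have [n0 Ha] := acc_E lp lP' (fun n r => (pow n r).2).
have [n1 Hb] := dcc_F c PID np.

pose N := maxn (maxn n0 n1) 1.
have n0N : (n0 <= N)%N by rewrite /N !leq_max leqnn.
have n1N : (n1 <= N)%N by rewrite /N !leq_max leqnn !orbT.
have N1 : (1 <= N)%N by rewrite /N leq_maxr.
have HaN : forall s m, P (c ^+ m * s) -> P (c ^+ N * s).
  by move=> s m; apply: Ha.
have PcNb : P (c ^+ N * b) by apply: (HaN b 1%N); rewrite expr1.
have eNN : c ^+ (N + N) = c ^+ N * c ^+ N by rewrite exprD.
have PcN : P (c ^+ N).
  have FN : Fset c p N (c ^+ N) by exists 1, 0; rewrite mul1r mul0r addr0.
  have [r [q eq1]] := Hb (N + N)%N _ (leq_trans n1N (leq_addr N N))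
     (Fset_anti n1N FN).
  have [[r' er'] _] := pow N r.
  pose y := 1 - r' * c ^+ N.
  have eq2 : c ^+ N = c ^+ N * (r' * c ^+ N) + q * p.
    by rewrite {1}eq1 eNN mulrA er' -mulrA.
  have Py1 : P (c ^+ N * y).
    have -> : c ^+ N * y = q * p.
      by rewrite /y mulrBr mulr1 {1}eq2 addrAC subrr add0r.
    by apply/Hp; exists q.
  have Pyp : P (p * y).
    have [[s es] _] := pow N (p * r').
    have Ps : P (c ^+ N * s).
      apply: (HaN s (N + N)%N); rewrite eNN -mulrA -es.
      have -> : p * r' * c ^+ N = p - p * y by rewrite /y mulrBr mulr1 opprB addrC subrK mulrA.
      rewrite mulrBr; apply: (PD); first exact: PM.
      apply: (PN); have [_ [p'' ep'']] := pow N p.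
      by rewrite mulrA ep'' -mulrA; apply: (PM).
    have -> : p * y = p - c ^+ N * s by rewrite -es /y mulrBr mulr1 mulrA.
    by apply: (PD) => //; apply: (PN).
  have Pyx : forall x, P x -> P (x * y).
    by move=> x /Hp [t ->]; rewrite -mulrA; apply: (PM).
  case: (cp _ _ Py1 Pyx) => // Py.
  exfalso; apply: nPb.
  have [[b'' eb''] _] := pow N (b * r').
  have -> : b = b * y + c ^+ N * b''.
    by rewrite -eb'' -mulrA -mulrDr /y subrK mulr1.
  apply: (PD); first exact: PM.
  apply: (HaN b'' (N + N)%N); rewrite eNN -mulrA -eb''.
  have -> : b * r' * c ^+ N = b - b * y by rewrite /y mulrBr mulr1 opprB addrC subrK mulrA.
  rewrite mulrBr; apply: (PD) => //; apply: (PN).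
  by rewrite mulrA; apply: (PM).
have [u' eu'] : exists u', c ^+ N = p * u'.
  have /Hp [u eu] := PcN.
  have nu : u != 0.
    by apply/eqP=> u0; move: (expr_neq0' dom nc N); rewrite eu u0 mul0r eqxx.
  have [[u' e'] _] := pow N u.
  exists u'; apply: (dom_mulfI dom nu).
  by rewrite e' {1}eu mulrA.
case: (classic (exists j d, T (p * j) /\ D d /\ ~ P (j * d))).
  move=> [j [d [Tpj [Dd nP]]]].
  have Tcj : T (c * j) by apply/Hc; exists j.
  have Py1 : P (c * (j * d)) by rewrite mulrA; apply: Tcj.
  have Pyp : P (p * (j * d)) by rewrite mulrA; apply: Tpj.
  have Pyx : forall x, P x -> P (x * (j * d)).
    by move=> x /Hp [t ->]; rewrite -mulrA; apply: (PM).
  by case: (cp _ _ Py1 Pyx).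
move=> H.
have HB : forall j, T (p * j) -> T j.
  move=> j Tpj d Dd; apply: NNPP => nP; apply: H; exists j, d; done.
have desc : forall m, (exists w, c ^+ m = p * w) -> exists w, 1 = p * w.
  elim=> [|m IH] [w ew]; first by exists w; rewrite -ew expr0.
  apply: IH.
  have Tw : T w by apply: HB; rewrite -ew exprS; apply/Hc; exists (c ^+ m).
  have /Hc [v ev] := Tw.
  have [v'' ev''] := Hinv2 v.
  exists v''; apply: (dom_mulIf dom nc).
  by rewrite -exprSr ew ev ev'' mulrA.
have [w ew] := desc N (ex_intro _ u' eu').
have wp : w * p = 1 := dom_inv dom (esym ew).
have [x nPx] := prop; apply: nPx.
rewrite -(mulr1 x) -wp mulrA; apply/Hp; by exists (x * w).
Qed.
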